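(* Let $f:\mathbb{R}\to(0,\infty)$ be a smooth function with positive lower and upper bounds, and let $g_f=-f^2(x)\,dt^2+dx^2$ on $\mathbb{R}^2$ with coordinates $(t,x)$, time-oriented by $\partial/\partial t$. If $p=(t_0,x_0)$ and $f(x_0)=\sup_{x\in\mathbb{R}}f(x)$, then $p$ is a timelike pole of $(\mathbb{R}^2,g_f)$.
   Context: A point $p$ of a Lorentzian manifold is a timelike pole if no timelike geodesic starting at $p$ contains a pair of conjugate points. *)

(* Defs.v *)
From Stdlib Require Import Reals Lra.
Open Scope R_scope.

(* Coordinate index 0 = t, 1 = x.  A smooth f is given together with
   the family of all its derivatives: fd 0 = f, fd (n+1) = (fd n)'. *)

Definition smooth_family (fd : nat -> R -> R) : Prop :=
  forall (n : nat) (x : R), derivable_pt_lim (fd n) x (fd (S n) x).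

Definition sum2 (F : nat -> R) : R := F 0%nat + F 1%nat.

Definition gmet (fd : nat -> R -> R) (x : R) (i j : nat) : R :=
  match i, j with
  | 0%nat, 0%nat => - (fd 0%nat x) ^ 2
  | 1%nat, 1%nat => 1
  | _, _ => 0
  end.

(* Christoffel symbols Gamma^k_{ij} of the Levi-Civita connection of g_f
   (they depend only on x):  Gamma^t_{tx} = Gamma^t_{xt} = f'/f,
   Gamma^x_{tt} = f f', all others 0. *)
Definition Chr (fd : nat -> R -> R) (k i j : nat) (x : R) : R :=
  match k, i, j with
  | 0%nat, 0%nat, 1%nat | 0%nat, 1%nat, 0%nat => fd 1%nat x / fd 0%nat x
  | 1%nat, 0%nat, 0%nat => fd 0%nat x * fd 1%nat x
  | _, _, _ => 0
  end.

(* partial derivative d_l Gamma^k_{ij}  (d_t = 0, d_x computed) *)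
Definition dChr (fd : nat -> R -> R) (l k i j : nat) (x : R) : R :=
  match l with
  | 1%nat =>
    match k, i, j with
    | 0%nat, 0%nat, 1%nat | 0%nat, 1%nat, 0%nat =>
        (fd 2%nat x * fd 0%nat x - fd 1%nat x ^ 2) / (fd 0%nat x) ^ 2
    | 1%nat, 0%nat, 0%nat => fd 1%nat x ^ 2 + fd 0%nat x * fd 2%nat x
    | _, _, _ => 0
    end
  | _ => 0
  end.

(* Riemann tensor R^k_{lij}, with R(d_i,d_j) d_l = R^k_{lij} d_k and
   R(X,Y) = [nabla_X, nabla_Y] - nabla_[X,Y]. *)
Definition Riem (fd : nat -> R -> R) (k l i j : nat) (x : R) : R :=
  dChr fd i k j l x - dChr fd j k i l x
  + sum2 (fun m => Chr fd k i m x * Chr fd m j l x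
                   - Chr fd k j m x * Chr fd m i l x).

(* c k s = k-th coordinate of the curve at parameter s; v, a = its first and
   second derivatives.  Geodesic on the parameter interval [0,T]. *)
Definition geodesic (fd : nat -> R -> R) (T : R) (c v a : nat -> R -> R) : Prop :=
  forall s, 0 <= s <= T -> forall k : nat, (k < 2)%nat ->
    derivable_pt_lim (c k) s (v k s) /\
    derivable_pt_lim (v k) s (a k s) /\
    a k s + sum2 (fun i => sum2 (fun j => Chr fd k i j (c 1%nat s) * v i s * v j s)) = 0.

Definition timelike (fd : nat -> R -> R) (T : R) (c v : nat -> R -> R) : Prop :=
  forall s, 0 <= s <= T ->
    sum2 (fun i => sum2 (fun j => gmet fd (c 1%nat s) i j * v i s * v j s)) < 0.

(* J is a Jacobi field along the curve (c,v) on [a,b]: J1 = dJ/ds,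
   W = D J/ds (covariant derivative), W1 = dW/ds, and
   D^2 J/ds^2 + R(J, c') c' = 0. *)
Definition jacobi (fd : nat -> R -> R) (a b : R) (c v J J1 W W1 : nat -> R -> R) : Prop :=
  forall s, a <= s <= b -> forall k : nat, (k < 2)%nat ->
    derivable_pt_lim (J k) s (J1 k s) /\
    W k s = J1 k s + sum2 (fun i => sum2 (fun j => Chr fd k i j (c 1%nat s) * v i s * J j s)) /\
    derivable_pt_lim (W k) s (W1 k s) /\
    W1 k s + sum2 (fun i => sum2 (fun j => Chr fd k i j (c 1%nat s) * v i s * W j s))
    + sum2 (fun l => sum2 (fun i => sum2 (fun j =>
         Riem fd k l i j (c 1%nat s) * J i s * v j s * v l s))) = 0.

Definition conjugate (fd : nat -> R -> R) (c v : nat -> R -> R) (a b : R) : Prop :=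
  a < b /\
  exists J J1 W W1 : nat -> R -> R,
    jacobi fd a b c v J J1 W W1 /\
    J 0%nat a = 0 /\ J 1%nat a = 0 /\ J 0%nat b = 0 /\ J 1%nat b = 0 /\
    exists s, a <= s <= b /\ (J 0%nat s <> 0 \/ J 1%nat s <> 0).

Definition timelike_pole (fd : nat -> R -> R) (t0 x0 : R) : Prop :=
  forall (T : R) (c v acc : nat -> R -> R),
    geodesic fd T c v acc -> timelike fd T c v ->
    c 0%nat 0 = t0 -> c 1%nat 0 = x0 ->
    ~ (exists a b, 0 <= a /\ b <= T /\ conjugate fd c v a b).

(* Main.v *)
Require Import Defs.
From Stdlib Require Import Reals.
From Stdlib Require Import Lra Psatz.
Open Scope R_scope.

Lemma D_ext_val f s l l' : derivable_pt_lim f s l -> l = l' -> derivable_pt_lim f s l'.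
Proof. intros H ->; exact H. Qed.
Lemma D_plus u v s du dv : derivable_pt_lim u s du -> derivable_pt_lim v s dv ->
  derivable_pt_lim (fun y => u y + v y) s (du + dv).
Proof. intros; exact (derivable_pt_lim_plus u v s du dv H H0). Qed.
Lemma D_minus u v s du dv : derivable_pt_lim u s du -> derivable_pt_lim v s dv ->
  derivable_pt_lim (fun y => u y - v y) s (du - dv).
Proof. intros; exact (derivable_pt_lim_minus u v s du dv H H0). Qed.
Lemma D_mult u v s du dv : derivable_pt_lim u s du -> derivable_pt_lim v s dv ->
  derivable_pt_lim (fun y => u y * v y) s (du * v s + u s * dv).
Proof. intros; exact (derivable_pt_lim_mult u v s du dv H H0). Qed.
Lemma D_opp u s du : derivable_pt_lim u s du ->
  derivable_pt_lim (fun y => - u y) s (- du).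
Proof. intros; exact (derivable_pt_lim_opp u s du H). Qed.
Lemma D_div u v s du dv : derivable_pt_lim u s du -> derivable_pt_lim v s dv -> v s <> 0 ->
  derivable_pt_lim (fun y => u y / v y) s ((du * v s - dv * u s) / Rsqr (v s)).
Proof. intros; exact (derivable_pt_lim_div u v s du dv H H0 H1). Qed.
Lemma D_const (c s : R) : derivable_pt_lim (fun _ => c) s 0.
Proof. exact (derivable_pt_lim_const c s). Qed.
Lemma D_comp (g u : R -> R) s du dg : derivable_pt_lim u s du -> derivable_pt_lim g (u s) dg ->
  derivable_pt_lim (fun y => g (u y)) s (dg * du).
Proof. intros; exact (derivable_pt_lim_comp u g s du dg H H0). Qed.

Lemma D_id s : derivable_pt_lim (fun y => y) s 1.
Proof. exact (derivable_pt_lim_id s). Qed.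
#[local] Hint Resolve derivable_pt_lim_exp : core.
Ltac dt := first
  [ eapply D_const | eapply D_id | eapply D_plus; dt | eapply D_minus; dt | eapply D_mult; dt | eapply D_opp; dt
  | eapply D_div; [dt | dt | ] | eapply D_comp; [dt | solve [eauto] ] | eassumption ].
Lemma geo_pt fd T c v acc s : geodesic fd T c v acc -> 0<=s<=T ->
 derivable_pt_lim (c 0%nat) s (v 0%nat s) /\ derivable_pt_lim (c 1%nat) s (v 1%nat s) /\
 derivable_pt_lim (v 0%nat) s (acc 0%nat s) /\ derivable_pt_lim (v 1%nat) s (acc 1%nat s) /\
 acc 0%nat s = - (2 * (fd 1%nat (c 1%nat s) / fd 0%nat (c 1%nat s)) * v 0%nat s * v 1%nat s) /\
 acc 1%nat s = - (fd 0%nat (c 1%nat s) * fd 1%nat (c 1%nat s) * v 0%nat s * v 0%nat s).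
Proof.
  intros Hg Hs.
  destruct (Hg s Hs 0%nat ltac:(lia)) as (d0 & a0 & e0).
  destruct (Hg s Hs 1%nat ltac:(lia)) as (d1 & a1 & e1).
  unfold sum2, Chr in e0, e1. simpl in e0, e1.
  repeat split; auto; lra.
Qed.

Lemma jac_pt fd a b c v J J1 W W1 s : jacobi fd a b c v J J1 W W1 -> a<=s<=b ->
  derivable_pt_lim (J 0%nat) s (J1 0%nat s) /\ derivable_pt_lim (J 1%nat) s (J1 1%nat s) /\
  derivable_pt_lim (W 0%nat) s (W1 0%nat s) /\ derivable_pt_lim (W 1%nat) s (W1 1%nat s) /\
  W 0%nat s = J1 0%nat s + fd 1%nat (c 1%nat s) / fd 0%nat (c 1%nat s) * (v 0%nat s * J 1%nat s + v 1%nat s * J 0%nat s) /\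
  W 1%nat s = J1 1%nat s + fd 0%nat (c 1%nat s) * fd 1%nat (c 1%nat s) * v 0%nat s * J 0%nat s /\
  W1 0%nat s = - (sum2 (fun i => sum2 (fun j => Chr fd 0 i j (c 1%nat s) * v i s * W j s)))
    - sum2 (fun l => sum2 (fun i => sum2 (fun j =>
         Riem fd 0 l i j (c 1%nat s) * J i s * v j s * v l s))) /\
  W1 1%nat s = - (sum2 (fun i => sum2 (fun j => Chr fd 1 i j (c 1%nat s) * v i s * W j s)))
    - sum2 (fun l => sum2 (fun i => sum2 (fun j =>
         Riem fd 1 l i j (c 1%nat s) * J i s * v j s * v l s))).
Proof.
  intros Hg Hs.
  destruct (Hg s Hs 0%nat ltac:(lia)) as (d0 & w0 & dw0 & e0).
  destruct (Hg s Hs 1%nat ltac:(lia)) as (d1 & w1 & dw1 & e1).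
  repeat split; auto; try lra.
  - rewrite w0. unfold sum2, Chr. simpl. ring.
  - rewrite w1. unfold sum2, Chr. simpl. ring.
Qed.
Section S.
Variables (fd : nat -> R -> R) (T a b : R) (c v acc J J1 W W1 : nat -> R -> R).
Hypothesis Hs : smooth_family fd.
Hypothesis Hpos : forall x, 0 < fd 0%nat x.
Hypothesis Hg : geodesic fd T c v acc.

Lemma cons_E s : 0 <= s <= T ->
  derivable_pt_lim (fun y => fd 0%nat (c 1%nat y) * fd 0%nat (c 1%nat y) * v 0%nat y) s 0.
Proof.
  intros H. destruct (geo_pt _ _ _ _ _ _ Hg H) as (d0 & d1 & a0 & a1 & e0 & e1).
  eapply D_ext_val; [dt|]. cbv beta. rewrite e0. field.
  specialize (Hpos (c 1%nat s)). lra.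
Qed.

Lemma cons_Q s : 0 <= s <= T ->
  derivable_pt_lim (fun y => v 1%nat y * v 1%nat y - fd 0%nat (c 1%nat y) * fd 0%nat (c 1%nat y) * v 0%nat y * v 0%nat y) s 0.
Proof.
  intros H. destruct (geo_pt _ _ _ _ _ _ Hg H) as (d0 & d1 & a0 & a1 & e0 & e1).
  eapply D_ext_val; [dt|]. cbv beta. rewrite e0, e1. field.
  specialize (Hpos (c 1%nat s)). lra.
Qed.

Hypothesis HJ : jacobi fd a b c v J J1 W W1.
Hypothesis Ha : 0 <= a.
Hypothesis Hb : b <= T.

Definition kk y := - (fd 0%nat (c 1%nat y) * fd 0%nat (c 1%nat y) * v 0%nat y * W 0%nat y) + v 1%nat y * W 1%nat y.

Lemma dh s : a <= s <= b ->
  derivable_pt_lim (fun y => - (fd 0%nat (c 1%nat y) * fd 0%nat (c 1%nat y) * v 0%nat y * J 0%nat y) + v 1%nat y * J 1%nat y) s (kk s).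
Proof.
  intros H. assert (H' : 0 <= s <= T) by lra.
  destruct (geo_pt _ _ _ _ _ _ Hg H') as (d0 & d1 & a0 & a1 & e0 & e1).
  destruct (jac_pt _ _ _ _ _ _ _ _ _ _ HJ H) as (j0 & j1 & w0 & w1 & f0 & f1 & g0 & g1).
  eapply D_ext_val; [dt|]. cbv beta. unfold kk. rewrite e0, e1, f0, f1. field.
  specialize (Hpos (c 1%nat s)). lra.
Qed.

Lemma dk s : a <= s <= b -> derivable_pt_lim kk s 0.
Proof.
  intros H. assert (H' : 0 <= s <= T) by lra.
  destruct (geo_pt _ _ _ _ _ _ Hg H') as (d0 & d1 & a0 & a1 & e0 & e1).
  destruct (jac_pt _ _ _ _ _ _ _ _ _ _ HJ H) as (j0 & j1 & w0 & w1 & f0 & f1 & g0 & g1).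
  unfold kk. eapply D_ext_val; [dt|]. cbv beta. rewrite e0, e1, g0, g1.
  cbv beta iota delta [sum2 Chr Riem dChr]. rewrite f0, f1. field.
  specialize (Hpos (c 1%nat s)). lra.
Qed.

Lemma domega s : a <= s <= b -> derivable_pt_lim (fun y =>
   - (fd 0%nat (c 1%nat y) * fd 0%nat (c 1%nat y) * W 0%nat y)
   + fd 0%nat (c 1%nat y) * fd 1%nat (c 1%nat y) * v 1%nat y * J 0%nat y
   - fd 0%nat (c 1%nat y) * fd 1%nat (c 1%nat y) * v 0%nat y * J 1%nat y) s 0.
Proof.
  intros H. assert (H' : 0 <= s <= T) by lra.
  destruct (geo_pt _ _ _ _ _ _ Hg H') as (d0 & d1 & a0 & a1 & e0 & e1).
  destruct (jac_pt _ _ _ _ _ _ _ _ _ _ HJ H) as (j0 & j1 & w0 & w1 & f0 & f1 & g0 & g1).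
  eapply D_ext_val; [dt|]. cbv beta. rewrite e0, e1, g0.
  cbv beta iota delta [sum2 Chr Riem dChr]. rewrite f0, f1. field.
  specialize (Hpos (c 1%nat s)). lra.
Qed.
End S.
Lemma L_const g a b : (forall s, a<=s<=b -> derivable_pt_lim g s 0) -> forall s, a<=s<=b -> g s = g a.
Proof.
  intros H s Hs. destruct (Req_dec s a) as [->|Hne]; [reflexivity|].
  destruct (MVT_cor2 g (fun _ => 0) a s) as (xi & E & _); [lra| |].
  - intros y Hy. apply H. lra.
  - lra.
Qed.

Lemma L_zero h w q a b : a < b -> h a = 0 -> h b = 0 ->
  (forall s, a<=s<=b -> derivable_pt_lim h s (w s * q s)) ->
  (forall s, a<=s<=b -> q s <> 0) ->
  (forall s, a<=s<=b -> derivable_pt_lim w s 0) ->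
  forall s, a<=s<=b -> h s = 0.
Proof.
  intros Hab ha hb Hh Hq Hw.
  destruct (MVT_cor2 h (fun s => w s * q s) a b Hab Hh) as (xi & E & Hxi).
  assert (Hwxi : w xi = 0).
  { assert (w xi * q xi = 0).
    { rewrite ha, hb in E. assert (b - a <> 0) by lra.
      apply (Rmult_eq_reg_r (b - a)); lra. }
    destruct (Rmult_integral _ _ H); auto. exfalso; apply (Hq xi); auto; lra. }
  assert (Hw0 : forall s, a<=s<=b -> w s = 0).
  { intros s Hs. rewrite (L_const w a b Hw s Hs). rewrite <- (L_const w a b Hw xi); auto; lra. }
  intros s Hs. rewrite (L_const h a b); auto.
  intros y Hy. specialize (Hh y Hy). rewrite Hw0 in Hh; auto. rewrite Rmult_0_l in Hh; auto.
Qed.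

Lemma L_mono g d a b : (forall s, a<=s<=b -> derivable_pt_lim g s (d s)) ->
  (forall s, a<=s<=b -> 0 <= d s) -> forall s t, a<=s<=b -> a<=t<=b -> s <= t -> g s <= g t.
Proof.
  intros H Hd s t Hs Ht Hst. destruct (Req_dec s t) as [->|Hne]; [lra|].
  destruct (MVT_cor2 g d s t) as (xi & E & Hxi); [lra| |].
  - intros y Hy. apply H. lra.
  - assert (0 <= d xi) by (apply Hd; lra). nra.
Qed.

Lemma L_conv y z cc a b : a < b -> y a = 0 -> y b = 0 ->
  (forall s, a<=s<=b -> derivable_pt_lim y s (z s)) ->
  (forall s, a<=s<=b -> derivable_pt_lim z s (cc s * y s)) ->
  (forall s, a<=s<=b -> 0 <= cc s) ->
  forall s, a<=s<=b -> y s = 0.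
Proof.
  intros Hab ya yb Hy Hz Hc.
  assert (HE : forall s, a<=s<=b -> y s * z s = 0).
  { intros s Hs.
    assert (D : forall s, a<=s<=b -> derivable_pt_lim (fun t => y t * z t) s (z s * z s + y s * (cc s * y s))).
    { intros u Hu. exact (derivable_pt_lim_mult y z u _ _ (Hy u Hu) (Hz u Hu)). }
    assert (P : forall s, a<=s<=b -> 0 <= z s * z s + y s * (cc s * y s)).
    { intros u Hu. specialize (Hc u Hu). nra. }
    pose proof (L_mono _ _ a b D P a s ltac:(lra) Hs ltac:(lra)).
    pose proof (L_mono _ _ a b D P s b Hs ltac:(lra) ltac:(lra)).
    simpl in *. rewrite ya in H. rewrite yb in H0. lra. }
  assert (D2 : forall s, a<=s<=b -> derivable_pt_lim (fun t => y t * y t) s 0).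
  { intros s Hs. pose proof (derivable_pt_lim_mult y y s _ _ (Hy s Hs) (Hy s Hs)).
    replace 0 with (z s * y s + y s * z s); [exact H|]. specialize (HE s Hs). lra. }
  intros s Hs. pose proof (L_const _ a b D2 s Hs). simpl in H. rewrite ya in H. nra.
Qed.

Lemma bnd g a b : a<=b -> (forall s, a<=s<=b -> exists l, derivable_pt_lim g s l) ->
  exists B, forall s, a<=s<=b -> Rabs (g s) <= B.
Proof.
  intros Hab H.
  assert (C : forall s, a<=s<=b -> continuity_pt g s).
  { intros s Hs. destruct (H s Hs) as [l Hl]. apply derivable_continuous_pt. exists l. exact Hl. }
  destruct (continuity_ab_maj g a b Hab C) as (M & HM & _).
  destruct (continuity_ab_min g a b Hab C) as (m & Hm & _).
  exists (Rabs (g M) + Rabs (g m)). intros s Hs. specialize (HM s Hs). specialize (Hm s Hs).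
  unfold Rabs in *. repeat destruct Rcase_abs; lra.
Qed.

Lemma crit1 F x0 l : (forall x, F x <= F x0) -> derivable_pt_lim F x0 l -> l = 0.
Proof.
  intros Hm Hd.
  pose proof (deriv_maximum F (x0-1) (x0+1) x0 (exist _ l Hd) ltac:(lra) ltac:(lra) (fun x _ _ => Hm x)).
  exact H.
Qed.

Lemma crit2 F F1 x0 d : (forall x, F x <= F x0) -> (forall x, derivable_pt_lim F x (F1 x)) ->
  F1 x0 = 0 -> derivable_pt_lim F1 x0 d -> d <= 0.
Proof.
  intros Hm HF H0 Hd. destruct (Rle_lt_dec d 0) as [|Hpos]; auto. exfalso.
  destruct (Hd (d/2) ltac:(lra)) as [delta Hdel].
  pose proof (cond_pos delta) as Hdp.
  destruct (MVT_cor2 F F1 x0 (x0 + delta/2)) as (xi & E & Hxi); [lra| intros; apply HF |].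
  specialize (Hdel (xi - x0) ltac:(lra)).
  rewrite Rabs_right in Hdel by lra.
  replace (x0 + (xi - x0)) with xi in Hdel by ring. rewrite H0 in Hdel.
  assert (Hr : Rabs ((F1 xi - 0) / (xi - x0) - d) < d / 2) by (apply Hdel; lra).
  apply Rabs_def2 in Hr. destruct Hr as [_ Hr].
  assert (0 < F1 xi).
  { assert (0 < (F1 xi - 0) / (xi - x0)) by lra.
    unfold Rdiv in H. apply Rmult_lt_reg_r with (/ (xi - x0)).
    apply Rinv_0_lt_compat; lra. lra. }
  specialize (Hm (x0 + delta/2)). nra.
Qed.
#[local] Hint Resolve derivable_pt_lim_exp : core.

Lemma gron fd T c v acc x0 M : smooth_family fd -> (forall x, 0 < fd 0%nat x) -> (forall x, fd 0%nat x <= M) ->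
  geodesic fd T c v acc -> 0 <= T -> c 1%nat 0 = x0 -> v 1%nat 0 = 0 -> fd 1%nat x0 = 0 ->
  forall s, 0<=s<=T -> c 1%nat s = x0 /\ v 1%nat s = 0.
Proof.
  intros Hs Hpos HM Hg HT Hc0 Hv0 Hf1.
  destruct (bnd (c 1%nat) 0 T HT) as [R0 HR0].
  { intros s Hs'. destruct (geo_pt _ _ _ _ _ _ Hg Hs') as (_ & d1 & _). eauto. }
  set (R := R0 + Rabs x0).
  assert (HR : forall s, 0<=s<=T -> Rabs (c 1%nat s - x0) <= R).
  { intros s Hs'. specialize (HR0 s Hs'). unfold R.
    pose proof (Rabs_triang (c 1%nat s) (- x0)). rewrite Rabs_Ropp in H. unfold Rminus. lra. }
  assert (R0p : 0 <= R) by (specialize (HR 0 ltac:(lra)); pose proof (Rabs_pos (c 1%nat 0 - x0)); lra).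
  destruct (bnd (fd 2%nat) (x0 - R) (x0 + R) ltac:(lra)) as [L HL].
  { intros; eexists; apply Hs. }
  assert (HL1 : forall y, Rabs (y - x0) <= R -> Rabs (fd 1%nat y) <= L * Rabs (y - x0)).
  { intros y Hy0. assert (Hy : x0 - R <= y <= x0 + R) by (unfold Rabs in Hy0; destruct Rcase_abs in Hy0; lra).
    destruct (Rtotal_order y x0) as [Hlt|[->|Hgt]].
    - destruct (MVT_cor2 (fd 1%nat) (fd 2%nat) y x0 Hlt) as (xi & E & Hxi). { intros; apply Hs. }
      rewrite Hf1 in E. specialize (HL xi ltac:(lra)).
      replace (fd 1%nat y) with (- (fd 2%nat xi * (x0 - y))) by lra.
      rewrite Rabs_Ropp, Rabs_mult, (Rabs_right (x0 - y)) by lra.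
      rewrite (Rabs_left (y - x0)) by lra. pose proof (Rabs_pos (fd 2%nat xi)). nra.
    - rewrite Hf1, Rminus_diag, Rabs_R0. lra.
    - destruct (MVT_cor2 (fd 1%nat) (fd 2%nat) x0 y Hgt) as (xi & E & Hxi). { intros; apply Hs. }
      rewrite Hf1 in E. specialize (HL xi ltac:(lra)).
      replace (fd 1%nat y) with (fd 2%nat xi * (y - x0)) by lra.
      rewrite Rabs_mult, (Rabs_right (y - x0)) by lra. pose proof (Rabs_pos (fd 2%nat xi)). nra. }
  destruct (bnd (v 0%nat) 0 T HT) as [V HV].
  { intros s Hs'. destruct (geo_pt _ _ _ _ _ _ Hg Hs') as (d0 & d1 & a0 & _). eauto. }
  set (K := M * L * V * V).
  assert (HK : forall s, 0<=s<=T -> Rabs (acc 1%nat s) <= K * Rabs (c 1%nat s - x0)).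
  { intros s Hs'. destruct (geo_pt _ _ _ _ _ _ Hg Hs') as (_ & _ & _ & _ & _ & e1).
    rewrite e1, Rabs_Ropp, !Rabs_mult.
    pose proof (HL1 _ (HR s Hs')). specialize (HV s Hs'). specialize (HM (c 1%nat s)).
    specialize (Hpos (c 1%nat s)). rewrite (Rabs_right (fd 0%nat _)) by lra.
    pose proof (Rabs_pos (fd 1%nat (c 1%nat s))). pose proof (Rabs_pos (v 0%nat s)).
    pose proof (Rabs_pos (c 1%nat s - x0)). unfold K.
    assert (Rabs (v 0%nat s) * Rabs (v 0%nat s) <= V * V) by nra.
    assert (fd 0%nat (c 1%nat s) * Rabs (fd 1%nat (c 1%nat s)) <= M * (L * Rabs (c 1%nat s - x0))) by nra.
    assert (0 <= M * (L * Rabs (c 1%nat s - x0))) by nra.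
    nra. }
  set (C := 2 + K * K).
  set (G := fun y => (c 1%nat y - x0) * (c 1%nat y - x0) + v 1%nat y * v 1%nat y).
  set (H := fun y => - (exp (- C * y) * G y)).
  assert (HD : forall s, 0<=s<=T -> derivable_pt_lim H s
     (- (exp (- C * s) * (2 * (c 1%nat s - x0) * v 1%nat s + 2 * v 1%nat s * acc 1%nat s - C * G s)))).
  { intros s Hs'. destruct (geo_pt _ _ _ _ _ _ Hg Hs') as (d0 & d1 & a0 & a1 & e0 & e1).
    unfold H, G. eapply D_ext_val; [dt|]. cbv beta. ring. }
  assert (HP : forall s, 0<=s<=T -> 0 <= - (exp (- C * s) * (2 * (c 1%nat s - x0) * v 1%nat s + 2 * v 1%nat s * acc 1%nat s - C * G s))).
  { intros s Hs'. pose proof (exp_pos (- C * s)). specialize (HK s Hs').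
    assert (2 * (c 1%nat s - x0) * v 1%nat s + 2 * v 1%nat s * acc 1%nat s - C * G s <= 0).
    { unfold G, C. cbv beta. set (u := c 1%nat s - x0) in *. set (w := v 1%nat s). set (z := acc 1%nat s) in *.
      assert (z * z <= K * K * (u * u)).
      { pose proof (Rabs_pos z). pose proof (Rabs_pos u).
        assert (Hq : Rabs z * Rabs z <= K * Rabs u * (K * Rabs u)) by nra.
        replace (Rabs z * Rabs z) with (z*z) in Hq by (rewrite <- Rabs_mult; apply eq_sym, Rabs_right; nra).
        replace (K * Rabs u * (K * Rabs u)) with (K*K*(Rabs u * Rabs u)) in Hq by ring.
        replace (Rabs u * Rabs u) with (u*u) in Hq by (rewrite <- Rabs_mult; apply eq_sym, Rabs_right; nra).
        exact Hq. }
      pose proof (Rle_0_sqr (u - w)). pose proof (Rle_0_sqr (w - z)). pose proof (Rle_0_sqr (K*w)).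
      pose proof (Rle_0_sqr u). unfold Rsqr in *. nra. }
    nra. }
  intros s Hs'.
  pose proof (L_mono H _ 0 T HD HP 0 s ltac:(lra) Hs' ltac:(lra)) as Hm.
  unfold H, G in Hm. rewrite Hc0, Hv0 in Hm. rewrite Rminus_diag in Hm.
  pose proof (exp_pos (- C * s)).
  pose proof (Rle_0_sqr (c 1%nat s - x0)). pose proof (Rle_0_sqr (v 1%nat s)). unfold Rsqr in *.
  assert (Hz : (c 1%nat s - x0) * (c 1%nat s - x0) + v 1%nat s * v 1%nat s <= 0).
  { assert (0 <= exp (- C * s) * ((c 1%nat s - x0) * (c 1%nat s - x0) + v 1%nat s * v 1%nat s)) by nra.
    nra. }
  pose proof (Rle_0_sqr (c 1%nat s - x0)). pose proof (Rle_0_sqr (v 1%nat s)). unfold Rsqr in *.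
  split; nra.
Qed.

Definition om (fd c v J W : nat -> R -> R) (y : R) : R :=
   - (fd 0%nat (c 1%nat y) * fd 0%nat (c 1%nat y) * W 0%nat y)
   + fd 0%nat (c 1%nat y) * fd 1%nat (c 1%nat y) * v 1%nat y * J 0%nat y
   - fd 0%nat (c 1%nat y) * fd 1%nat (c 1%nat y) * v 0%nat y * J 1%nat y.

Lemma dpsi fd T a b c v acc J J1 W W1 s : smooth_family fd -> (forall x, 0 < fd 0%nat x) ->
  geodesic fd T c v acc -> jacobi fd a b c v J J1 W W1 -> 0 <= a -> b <= T -> a <= s <= b ->
  v 1%nat s <> 0 ->
  - (fd 0%nat (c 1%nat s) * fd 0%nat (c 1%nat s) * v 0%nat s * J 0%nat s) + v 1%nat s * J 1%nat s = 0 ->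
  derivable_pt_lim (fun y => J 0%nat y / (v 1%nat y * v 1%nat y)) s
    (om fd c v J W s * (- / (fd 0%nat (c 1%nat s) * fd 0%nat (c 1%nat s) * v 1%nat s * v 1%nat s))).
Proof.
  intros Hs Hpos Hg HJ Ha Hb H Hv Hh. assert (H' : 0 <= s <= T) by lra.
  destruct (geo_pt _ _ _ _ _ _ Hg H') as (d0 & d1 & a0 & a1 & e0 & e1).
  destruct (jac_pt _ _ _ _ _ _ _ _ _ _ HJ H) as (j0 & j1 & w0 & w1 & f0 & f1 & g0 & g1).
  assert (HJ1 : J 1%nat s = fd 0%nat (c 1%nat s) * fd 0%nat (c 1%nat s) * v 0%nat s * J 0%nat s / v 1%nat s)
    by (field_simplify_eq; [lra| exact Hv]).
  specialize (Hpos (c 1%nat s)).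
  eapply D_ext_val; [dt|].
  - apply Rmult_integral_contrapositive; split; exact Hv.
  - cbv beta. unfold om. rewrite e1, f0, HJ1. unfold Rsqr. field. split; [exact Hv| lra].
Qed.

Theorem lemma3p1 (f : R -> R) (fd : nat -> R -> R)
  (Hf : fd 0%nat = f) (Hsmooth : smooth_family fd)
  (Hbounds : exists m M : R, 0 < m /\ forall x, m <= f x <= M)
  (t0 x0 : R)
  (Hsup : is_lub (fun y => exists x, y = f x) (f x0)) :
  timelike_pole fd t0 x0.
Proof.
  subst f. destruct Hbounds as (m & M & Hm & HmM).
  assert (Hpos : forall x, 0 < fd 0%nat x) by (intro x; specialize (HmM x); lra).
  assert (HM : forall x, fd 0%nat x <= M) by (intro x; apply HmM).
  assert (Hmax : forall x, fd 0%nat x <= fd 0%nat x0) by (intro x; apply (proj1 Hsup); eauto).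
  assert (F1x0 : fd 1%nat x0 = 0) by (apply (crit1 (fd 0%nat) x0); auto).
  assert (F2x0 : fd 2%nat x0 <= 0) by (apply (crit2 (fd 0%nat) (fd 1%nat) x0); auto).
  intros T c v acc Hg _ Hc0 Hc1
    (a & b & Ha & Hb & Hab & J & J1 & W & W1 & HJ & Ja0 & Ja1 & Jb0 & Jb1 & s0 & Hs0 & Hnz).
  assert (HT : 0 <= T) by lra.
  destruct (Req_dec (v 1%nat 0) 0) as [Hv0 | Hv0].
  - pose proof (gron fd T c v acc x0 M Hsmooth Hpos HM Hg HT Hc1 Hv0 F1x0) as Hgr.
    assert (HJ0 : forall s, a<=s<=b -> J 0%nat s = 0).
    { apply (L_zero (J 0%nat) (W 0%nat) (fun _ => 1) a b); auto.
      - intros s Hs. destruct (jac_pt _ _ _ _ _ _ _ _ _ _ HJ Hs) as (j0 & j1 & w0 & w1 & f0 & f1 & g0 & g1).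
        destruct (Hgr s ltac:(lra)) as [Ex Ev]. rewrite Rmult_1_r, f0, Ex, F1x0.
        replace (J1 0%nat s + 0 / fd 0%nat x0 * (v 0%nat s * J 1%nat s + v 1%nat s * J 0%nat s)) with (J1 0%nat s)
          by (specialize (Hpos x0); field; lra). exact j0.
      - intros s Hs. destruct (jac_pt _ _ _ _ _ _ _ _ _ _ HJ Hs) as (j0 & j1 & w0 & w1 & f0 & f1 & g0 & g1).
        destruct (Hgr s ltac:(lra)) as [Ex Ev].
        replace 0 with (W1 0%nat s); [exact w0|].
        rewrite g0. cbv beta iota delta [sum2 Chr Riem dChr]. rewrite Ex, Ev, F1x0.
        specialize (Hpos x0). field. lra. }
    assert (HJ1' : forall s, a<=s<=b -> J 1%nat s = 0).
    { apply (L_conv (J 1%nat) (W 1%nat) (fun s => - (fd 0%nat x0 * fd 2%nat x0 * v 0%nat s * v 0%nat s)) a b); auto.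
      - intros s Hs. destruct (jac_pt _ _ _ _ _ _ _ _ _ _ HJ Hs) as (j0 & j1 & w0 & w1 & f0 & f1 & g0 & g1).
        destruct (Hgr s ltac:(lra)) as [Ex Ev]. rewrite f1, Ex, F1x0.
        replace (J1 1%nat s + fd 0%nat x0 * 0 * v 0%nat s * J 0%nat s) with (J1 1%nat s) by ring. exact j1.
      - intros s Hs. destruct (jac_pt _ _ _ _ _ _ _ _ _ _ HJ Hs) as (j0 & j1 & w0 & w1 & f0 & f1 & g0 & g1).
        destruct (Hgr s ltac:(lra)) as [Ex Ev].
        eapply D_ext_val; [exact w1|].
        rewrite g1. cbv beta iota delta [sum2 Chr Riem dChr]. rewrite Ex, Ev, F1x0, (HJ0 s Hs).
        specialize (Hpos x0). field. lra.
      - intros s Hs. cbv beta. specialize (Hpos x0). pose proof (Rle_0_sqr (v 0%nat s)). unfold Rsqr in *.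
        replace (- (fd 0%nat x0 * fd 2%nat x0 * v 0%nat s * v 0%nat s)) with ((fd 0%nat x0 * - fd 2%nat x0) * (v 0%nat s * v 0%nat s)) by ring. apply Rmult_le_pos; [nra|exact H]. }
    destruct Hnz as [H|H]; apply H; auto.
  - assert (Hv : forall s, 0<=s<=T -> v 1%nat s <> 0).
    { intros s Hs Hvs.
      pose proof (L_const _ 0 T (cons_E fd T c v acc Hsmooth Hpos Hg) s Hs) as EE.
      pose proof (L_const _ 0 T (cons_Q fd T c v acc Hsmooth Hpos Hg) s Hs) as QQ.
      simpl in EE, QQ. rewrite Hc1 in EE, QQ. rewrite Hvs in QQ.
      pose proof (Hmax (c 1%nat s)). pose proof (Hpos (c 1%nat s)). pose proof (Hpos x0).
      set (Fs := fd 0%nat (c 1%nat s)) in *. set (F0 := fd 0%nat x0) in *.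
      set (p := v 0%nat s) in *. set (q := v 0%nat 0) in *. set (w0 := v 1%nat 0) in *.
      assert (A : w0*w0 = F0*F0*q*q - Fs*Fs*p*p) by lra.
      assert (B : (Fs*Fs*p)*(Fs*Fs*p) = (F0*F0*q)*(F0*F0*q)) by (rewrite EE; ring).
      assert (C : w0*w0*(Fs*Fs) = F0*F0*q*q*(Fs*Fs - F0*F0)).
      { transitivity (F0*F0*q*q*(Fs*Fs) - (Fs*Fs*p)*(Fs*Fs*p)). rewrite A; ring. rewrite B; ring. }
      assert (0 <= F0*F0*q*q) by (pose proof (Rle_0_sqr (F0*q)); unfold Rsqr in *; nra).
      assert (Fs*Fs - F0*F0 <= 0) by nra.
      assert (0 < w0*w0) by (pose proof (Rsqr_pos_lt w0 Hv0); unfold Rsqr in *; lra).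
      assert (0 < w0*w0*(Fs*Fs)) by (apply Rmult_lt_0_compat; nra).
      nra. }
    assert (Hh : forall s, a<=s<=b ->
       - (fd 0%nat (c 1%nat s) * fd 0%nat (c 1%nat s) * v 0%nat s * J 0%nat s) + v 1%nat s * J 1%nat s = 0).
    { apply (L_zero _ (kk fd c v W) (fun _ => 1) a b); auto.
      - rewrite Ja0, Ja1; ring.
      - rewrite Jb0, Jb1; ring.
      - intros s Hs. rewrite Rmult_1_r. exact (dh fd T a b c v acc J J1 W W1 Hsmooth Hpos Hg HJ Ha Hb s Hs).
      
      - intros s Hs. exact (dk fd T a b c v acc J J1 W W1 Hsmooth Hpos Hg HJ Ha Hb s Hs). }
    assert (Hpsi : forall s, a<=s<=b -> J 0%nat s / (v 1%nat s * v 1%nat s) = 0).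
    { apply (L_zero _ (om fd c v J W) (fun s => - / (fd 0%nat (c 1%nat s) * fd 0%nat (c 1%nat s) * v 1%nat s * v 1%nat s)) a b); auto.
      - rewrite Ja0; unfold Rdiv; ring.
      - rewrite Jb0; unfold Rdiv; ring.
      - intros s Hs. apply (dpsi fd T a b c v acc J J1 W W1 s Hsmooth Hpos Hg HJ Ha Hb Hs).
        + apply Hv; lra.
        + apply Hh; auto.
      - intros s Hs. cbv beta. apply Ropp_neq_0_compat, Rinv_neq_0_compat.
        pose proof (Hv s ltac:(lra)). pose proof (Hpos (c 1%nat s)).
        assert (0 < v 1%nat s * v 1%nat s) by (pose proof (Rsqr_pos_lt _ H); unfold Rsqr in *; lra). apply Rgt_not_eq. assert (0 < fd 0%nat (c 1%nat s) * fd 0%nat (c 1%nat s)) by nra. nra.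
      - intros s Hs. exact (domega fd T a b c v acc J J1 W W1 Hsmooth Hpos Hg HJ Ha Hb s Hs). }
    pose proof (Hv s0 ltac:(lra)) as Hvs. pose proof (Hpsi s0 Hs0) as P. pose proof (Hh s0 Hs0) as Q.
    assert (Z0 : J 0%nat s0 = 0).
    { replace (J 0%nat s0) with (J 0%nat s0 / (v 1%nat s0 * v 1%nat s0) * (v 1%nat s0 * v 1%nat s0))
        by (field; exact Hvs). rewrite P; ring. }
    rewrite Z0 in Q.
    assert (Z1 : J 1%nat s0 = 0).
    { apply (Rmult_eq_reg_l (v 1%nat s0)); [|exact Hvs]. lra. }
    destruct Hnz; auto.
Qed.
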